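(* Let $A$ be a locally-complex Cayley--Dickson algebra, let $I\in A$ with $\mathrm{tr}(I)=0$ and $\mathrm{n}(I)=1$, and let $f(x)\in A[x]$. Then for every $\lambda\in\mathbb{C}_I$ we have $f_I(\lambda)\in\mathbb{C}_I$ and $f_I^{\perp}(\lambda)\in\mathbb{C}_I^{\perp}$. Consequently, for $\lambda\in\mathbb{C}_I$, $f(\lambda)=0$ if and only if $f_I(\lambda)=f_I^{\perp}(\lambda)=0$.
   Context: Real Cayley--Dickson algebras: $A_0=\mathbb{R}$ with identity involution, $A_{k+1}=A_k\{\gamma_k\}=A_k\times A_k$ with product $(a,b)(c,d)=(ac+\gamma_k\bar d b,\ da+b\bar c)$ and involution $\overline{(a,b)}=(\bar a,-b)$. A real unital algebra is locally-complex if every non-real element generates a subalgebra isomorphic to $\mathbb{C}$ (for Cayley--Dickson algebras: all $\gamma_k=-1$ up to isomorphism). Trace $\mathrm{tr}(\lambda)=\lambda+\bar\lambda\in\mathbb{R}$, norm $\mathrm{n}(\lambda)=\bar\lambda\lambda\in\mathbb{R}$; $\langle\cdot,\cdot\rangle$ is the symmetric bilinear form with $\langle a,a\rangle=\mathrm{n}(a)$ (the Euclidean inner product). For $I$ with trace $0$ and norm $1$, $\mathbb{C}_I=\mathbb{R}+\mathbb{R}I\cong\mathbb{C}$, $\mathbb{C}_I^\perp=\{a\in A:\langle a,b\rangle=0\ \forall b\in\mathbb{C}_I\}$, and $\pi_I:A\to\mathbb{C}_I$ is the orthogonal projection. $A[x]=A\otimes_{\mathbb{R}}\mathbb{R}[x]$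 with central $x$; for $f(x)=\sum_k a_kx^k$ put $f_I(x)=\sum_k\pi_I(a_k)x^k$ and $f_I^\perp(x)=\sum_k(a_k-\pi_I(a_k))x^k$, so $f=f_I+f_I^\perp$; substitution $f(r)=\sum_k a_k(r^k)$. *)

(* Defs.v *)
From mathcomp Require Import all_boot all_order all_algebra.
From mathcomp Require Import reals.
Set Implicit Arguments. Unset Strict Implicit. Unset Printing Implicit Defensive.
Import Order.TTheory GRing.Theory Num.Theory.
Local Open Scope ring_scope.

Section CayleyDickson.
Variable R : realType.

Fixpoint CD (n : nat) : Type :=
  match n with 0 => R | m.+1 => (CD m * CD m)%type end.

Fixpoint cd_zero (n : nat) : CD n :=
  match n return CD n with 0 => 0 | m.+1 => (cd_zero m, cd_zero m) end.

Fixpoint cd_one (n : nat) : CD n :=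
  match n return CD n with 0 => 1 | m.+1 => (cd_one m, cd_zero m) end.

Fixpoint cd_add (n : nat) : CD n -> CD n -> CD n :=
  match n return CD n -> CD n -> CD n with
  | 0 => fun x y => x + y
  | m.+1 => fun x y => (cd_add x.1 y.1, cd_add x.2 y.2)
  end.

Fixpoint cd_opp (n : nat) : CD n -> CD n :=
  match n return CD n -> CD n with
  | 0 => fun x => - x
  | m.+1 => fun x => (cd_opp x.1, cd_opp x.2)
  end.

Fixpoint cd_scale (n : nat) (r : R) : CD n -> CD n :=
  match n return CD n -> CD n with
  | 0 => fun x => r * x
  | m.+1 => fun x => (cd_scale r x.1, cd_scale r x.2)
  end.

Fixpoint cd_conj (n : nat) : CD n -> CD n :=
  match n return CD n -> CD n with
  | 0 => fun x => x
  | m.+1 => fun x => (cd_conj x.1, cd_opp x.2)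
  end.

(* product with all gamma_k = -1 (locally-complex case):
   (a,b)(c,d) = (ac + gamma conj(d) b, d a + b conj(c)) *)
Fixpoint cd_mul (n : nat) : CD n -> CD n -> CD n :=
  match n return CD n -> CD n -> CD n with
  | 0 => fun x y => x * y
  | m.+1 => fun x y =>
      (cd_add (cd_mul x.1 y.1) (cd_scale (-1) (cd_mul (cd_conj y.2) x.2)),
       cd_add (cd_mul y.2 x.1) (cd_mul x.2 (cd_conj y.1)))
  end.

(* Euclidean inner product <.,.> (symmetric bilinear form with <a,a> = n(a)) *)
Fixpoint cd_ip (n : nat) : CD n -> CD n -> R :=
  match n return CD n -> CD n -> R with
  | 0 => fun x y => x * y
  | m.+1 => fun x y => cd_ip x.1 y.1 + cd_ip x.2 y.2
  end.

(* trace and norm as elements of A (they lie in R = R * 1) *)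
Definition cd_tr (n : nat) (x : CD n) : CD n := cd_add x (cd_conj x).
Definition cd_norm (n : nat) (x : CD n) : CD n := cd_mul (cd_conj x) x.

Definition in_CI (n : nat) (I x : CD n) : Prop :=
  exists r s : R, x = cd_add (cd_scale r (cd_one n)) (cd_scale s I).

Definition in_CI_perp (n : nat) (I x : CD n) : Prop :=
  forall b : CD n, in_CI I b -> cd_ip x b = 0.

(* orthogonal projection onto C_I (1 and I form an orthonormal basis of C_I
   when tr I = 0 and n(I) = 1) *)
Definition piI (n : nat) (I a : CD n) : CD n :=
  cd_add (cd_scale (cd_ip a (cd_one n)) (cd_one n)) (cd_scale (cd_ip a I) I).

Definition piI_perp (n : nat) (I a : CD n) : CD n :=
  cd_add a (cd_opp (piI I a)).

Fixpoint cd_pow (n : nat) (x : CD n) (k : nat) : CD n :=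
  match k with 0 => cd_one n | k'.+1 => cd_mul x (cd_pow x k') end.

(* polynomials in A[x] (central x) as coefficient lists [a_0; a_1; ...];
   substitution f(r) = sum_k a_k (r^k) *)
Fixpoint peval_from (n : nat) (s : seq (CD n)) (k : nat) (x : CD n) : CD n :=
  match s with
  | [::] => cd_zero n
  | a :: s' => cd_add (cd_mul a (cd_pow x k)) (peval_from s' k.+1 x)
  end.

Definition peval (n : nat) (f : seq (CD n)) (x : CD n) : CD n :=
  peval_from f 0 x.

Definition polyI (n : nat) (I : CD n) (f : seq (CD n)) : seq (CD n) :=
  map (piI I) f.
Definition polyI_perp (n : nat) (I : CD n) (f : seq (CD n)) : seq (CD n) :=
  map (piI_perp I) f.

End CayleyDickson.

(* Main.v *)
Require Import Defs.
From HB Require Import structures.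
From mathcomp Require Import all_boot all_order all_algebra.
From mathcomp Require Import boolp reals lra.
Set Implicit Arguments. Unset Strict Implicit. Unset Printing Implicit Defensive.
Import Order.TTheory GRing.Theory Num.Theory.
Local Open Scope ring_scope.

Section S.
Variable R : realType.
Implicit Types n : nat.

Lemma cd_addA n : associative (@cd_add R n).
Proof. elim: n => [|n IH] x y z /=; first by rewrite addrA. by rewrite !IH. Qed.
Lemma cd_addC n : commutative (@cd_add R n).
Proof. elim: n => [|n IH] x y /=; first by rewrite addrC. by rewrite IH (IH x.2). Qed.
Lemma cd_add0 n : left_id (cd_zero R n) (@cd_add R n).
Proof. elim: n => [|n IH] x /=; first by rewrite add0r. by rewrite !IH; case: x. Qed.
Lemma cd_addN n : left_inverse (cd_zero R n) (@cd_opp R n) (@cd_add R n).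
Proof. elim: n => [|n IH] x /=; first by rewrite addNr. by rewrite !IH. Qed.

HB.instance Definition _ n := gen_eqMixin (CD R n).
HB.instance Definition _ n := gen_choiceMixin (CD R n).
HB.instance Definition _ n := GRing.isZmodule.Build (CD R n) (@cd_addA n) (@cd_addC n) (@cd_add0 n) (@cd_addN n).

Lemma cd_scaleA n a b (v : CD R n) : cd_scale a (cd_scale b v) = cd_scale (a * b) v.
Proof. elim: n v => [|n IH] v /=; first by rewrite mulrA. by rewrite !IH. Qed.
Lemma cd_scale1 n (v : CD R n) : cd_scale 1 v = v.
Proof. elim: n v => [|n IH] v /=; first by rewrite mul1r. by rewrite !IH; case: v. Qed.
Lemma cd_scaleDr n a (u v : CD R n) : cd_scale a (cd_add u v) = cd_add (cd_scale a u) (cd_scale a v).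
Proof. elim: n u v => [|n IH] u v /=; first by rewrite mulrDr. by rewrite !IH. Qed.
Lemma cd_scaleDl n (v : CD R n) a b : cd_scale (a + b) v = cd_add (cd_scale a v) (cd_scale b v).
Proof. elim: n v => [|n IH] v /=; first by rewrite mulrDl. by rewrite !IH. Qed.

HB.instance Definition _ n := GRing.Zmodule_isLmodule.Build R (CD R n) (@cd_scaleA n) (@cd_scale1 n) (@cd_scaleDr n) (@cd_scaleDl n).

Lemma addE n (x y : CD R n) : cd_add x y = x + y. Proof. by []. Qed.
Lemma oppE n (x : CD R n) : cd_opp x = - x. Proof. by []. Qed.
Lemma zeroE n : cd_zero R n = 0. Proof. by []. Qed.
Lemma scaleE n a (x : CD R n) : cd_scale a x = a *: x. Proof. by []. Qed.
Lemma pairD n (a b c d : CD R n) : ((a, b) : CD R n.+1) + (c, d) = (a + c, b + d). Proof. by []. Qed.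
Lemma pairN n (a b : CD R n) : - ((a, b) : CD R n.+1) = (- a, - b). Proof. by []. Qed.
Lemma pairZ n r (a b : CD R n) : r *: ((a, b) : CD R n.+1) = (r *: a, r *: b). Proof. by []. Qed.
Lemma pair0 n : (0 : CD R n.+1) = ((0 : CD R n), (0 : CD R n)). Proof. by []. Qed.
Lemma pair1 n : cd_one R n.+1 = (cd_one R n, (0 : CD R n)). Proof. by []. Qed.
Fact cj_key : unit. Proof. exact: tt. Qed.
Fact ml_key : unit. Proof. exact: tt. Qed.
Fact ip_key : unit. Proof. exact: tt. Qed.
Definition cj n := locked_with cj_key (@cd_conj R n).
Definition ml n := locked_with ml_key (@cd_mul R n).
Definition ip n := locked_with ip_key (@cd_ip R n).
Lemma conjE n x : @cd_conj R n x = cj x. Proof. by rewrite /cj unlock. Qed.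
Lemma mulE n x y : @cd_mul R n x y = ml x y. Proof. by rewrite /ml unlock. Qed.
Lemma ipE n x y : @cd_ip R n x y = ip x y. Proof. by rewrite /ip !unlock. Qed.
Lemma cjP n (a b : CD R n) : cj ((a, b) : CD R n.+1) = (cj a, - b). Proof. by rewrite /cj !unlock. Qed.
Lemma mlP n (a b c d : CD R n) : ml ((a, b) : CD R n.+1) (c, d) = (ml a c - ml (cj d) b, ml d a + ml b (cj c)).
Proof. by rewrite /ml /cj !unlock /= scaleE scaleN1r. Qed.
Lemma ipP n (a b c d : CD R n) : ip ((a, b) : CD R n.+1) (c, d) = ip a c + ip b d. Proof. by rewrite /ip !unlock. Qed.
Lemma cj0E (x : CD R 0) : cj x = x. Proof. by rewrite /cj unlock. Qed.
Lemma ml0E (x y : CD R 0) : ml x y = (x : R) * y. Proof. by rewrite /ml unlock. Qed.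
Lemma ip0E (x y : CD R 0) : ip x y = (x : R) * y. Proof. by rewrite /ip !unlock. Qed.

Ltac simp := do 3 rewrite ?pairD ?pairN ?pairZ ?pair0 ?pair1 ?cjP ?mlP ?ipP.

Lemma conjD n (x y : CD R n) : cj (x + y) = cj x + cj y.
Proof. elim: n x y => [|n IH]; first by move=> *; rewrite !cj0E.
 all: move=> [a b] [c d]; simp. by rewrite IH opprD. Qed.
Lemma conjZ n r (x : CD R n) : cj (r *: x) = r *: cj x.
Proof. elim: n x => [|n IH]; first by move=> *; rewrite !cj0E.
 all: move=> [a b]; simp. by rewrite IH scalerN. Qed.
Lemma conjN n (x : CD R n) : cj (- x) = - cj x.
Proof. by rewrite -scaleN1r conjZ scaleN1r. Qed.
Lemma conj0 n : cj (0 : CD R n) = 0.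
Proof. by apply/(addrI (cj (0:CD R n))); rewrite -conjD !addr0. Qed.
Lemma conjK n (x : CD R n) : cj (cj x) = x.
Proof. elim: n x => [|n IH]; first by move=> *; rewrite !cj0E.
 all: move=> [a b]; simp. by rewrite IH opprK. Qed.
Lemma conj1 n : cj (cd_one R n) = cd_one R n.
Proof. elim: n => [|n IH]; first by move=> *; rewrite !cj0E.
simp. by rewrite IH oppr0. Qed.

Lemma mulD n : (forall x y z : CD R n, ml (x + y) z = ml x z + ml y z) /\
                (forall x y z : CD R n, ml z (x + y) = ml z x + ml z y).
Proof.
elim: n => [|n [IHl IHr]]; first by split=> x y z; rewrite !ml0E ?mulrDl ?mulrDr.
split=> [[a b] [c d] [e f]|[a b] [c d] [e f]]; simp.
  rewrite IHl IHl IHr IHr. congr pair.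
    by rewrite opprD addrACA.
  by rewrite addrACA.
rewrite !conjD !IHl !IHr. congr pair.
  by rewrite opprD addrACA.
by rewrite addrACA.
Qed.
Lemma cmulDl n (x y z : CD R n) : ml (x + y) z = ml x z + ml y z. Proof. by case: (mulD n). Qed.
Lemma cmulDr n (x y z : CD R n) : ml z (x + y) = ml z x + ml z y. Proof. by case: (mulD n). Qed.

Lemma mulZ n r : (forall x y : CD R n, ml (r *: x) y = r *: ml x y) /\
                (forall x y : CD R n, ml x (r *: y) = r *: ml x y).
Proof.
elim: n => [|n [IHl IHr]]; first by split=> x y; rewrite !ml0E; [exact: (esym (mulrA _ _ _)) | exact: mulrCA].
split=> [[a b] [c d]|[a b] [c d]]; simp.
  by rewrite !IHl !IHr scalerBr scalerDr.
by rewrite !conjZ !IHl !IHr scalerBr scalerDr.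
Qed.
Lemma cmulZl n r (x y : CD R n) : ml (r *: x) y = r *: ml x y. Proof. by case: (mulZ n r). Qed.
Lemma cmulZr n r (x y : CD R n) : ml x (r *: y) = r *: ml x y. Proof. by case: (mulZ n r). Qed.
Lemma cmulNl n (x y : CD R n) : ml (- x) y = - ml x y. Proof. by rewrite -scaleN1r cmulZl scaleN1r. Qed.
Lemma cmulNr n (x y : CD R n) : ml x (- y) = - ml x y. Proof. by rewrite -scaleN1r cmulZr scaleN1r. Qed.
Lemma cmul0l n (y : CD R n) : ml 0 y = 0. Proof. by apply/(addrI (ml 0 y)); rewrite -cmulDl !addr0. Qed.
Lemma cmul0r n (y : CD R n) : ml y 0 = 0. Proof. by apply/(addrI (ml y 0)); rewrite -cmulDr !addr0. Qed.

Lemma cmul1r n (x : CD R n) : ml x (cd_one R n) = x.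
Proof. elim: n x => [|n IH] ; first by move=> x; rewrite ml0E mulr1. move=> [a b]; simp.
by rewrite IH ?conj1 ?conj0 !cmul0l subr0 add0r IH. Qed.

Lemma cmul1l n (x : CD R n) : ml (cd_one R n) x = x.
Proof. elim: n x => [|n IH] ; first by move=> x; rewrite ml0E mul1r. move=> [a b]; simp.
by rewrite IH cmul0r cmul0l subr0 addr0 cmul1r. Qed.
Lemma conjM n (x y : CD R n) : cj (ml x y) = ml (cj y) (cj x).
Proof.
elim: n x y => [|n IH]; first by move=> x y; rewrite !ml0E !cj0E mulrC.
move=> [a b] [c d]; simp.
rewrite conjD conjN !IH !conjK !cmulNl !cmulNr opprK opprD addrC.
by congr pair; rewrite ?conjN ?cmulNl addrC.
Qed.

Lemma ipDl n (x y z : CD R n) : ip (x + y) z = ip x z + ip y z.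
Proof. elim: n x y z => [|n IH]; first by move=> *; rewrite !ip0E mulrDl.
move=> [a b] [c d] [e f]; simp. by rewrite !IH addrACA. Qed.
Lemma ipZl n r (x y : CD R n) : ip (r *: x) y = r * ip x y.
Proof. elim: n x y => [|n IH]; first by move=> x y; rewrite !ip0E; exact: (esym (mulrA _ _ _)).
move=> [a b] [c d]; simp. by rewrite !IH mulrDr. Qed.
Lemma ipC n (x y : CD R n) : ip x y = ip y x.
Proof. elim: n x y => [|n IH]; first by move=> *; rewrite !ip0E mulrC.
move=> [a b] [c d]; simp. by rewrite (IH a) (IH b). Qed.
Lemma ipDr n (x y z : CD R n) : ip z (x + y) = ip z x + ip z y.
Proof. by rewrite ipC ipDl !(ipC z). Qed.
Lemma ipZr n r (x y : CD R n) : ip y (r *: x) = r * ip y x.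
Proof. by rewrite ipC ipZl ipC. Qed.
Lemma ipNl n (x y : CD R n) : ip (- x) y = - ip x y.
Proof. by rewrite -scaleN1r ipZl mulN1r. Qed.
Lemma ipNr n (x y : CD R n) : ip y (- x) = - ip y x.
Proof. by rewrite -scaleN1r ipZr mulN1r. Qed.
Lemma ip0l n (x : CD R n) : ip 0 x = 0.
Proof. by rewrite -(scale0r (0 : CD R n)) ipZl mul0r. Qed.
Lemma ip0r n (x : CD R n) : ip x 0 = 0.
Proof. by rewrite ipC ip0l. Qed.
Lemma ip_conj n (x y : CD R n) : ip (cj x) (cj y) = ip x y.
Proof. elim: n x y => [|n IH]; first by move=> *; rewrite !cj0E.
move=> [a b] [c d]; simp. by rewrite IH ipNl ipNr opprK. Qed.
Lemma ipcj n (x y : CD R n) : ip (cj x) y = ip x (cj y).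
Proof. by rewrite -ip_conj conjK. Qed.
Lemma ip11 n : ip (cd_one R n) (cd_one R n) = 1.
Proof. elim: n => [|n IH]; first by rewrite ip0E mulr1.
simp. by rewrite IH ip0l addr0. Qed.
Lemma ip_ge0 n (x : CD R n) : 0 <= ip x x.
Proof. elim: n x => [|n IH]; first by move=> x; rewrite ip0E; exact: sqr_ge0.
move=> [a b]; simp. by rewrite addr_ge0. Qed.
Lemma ip_eq0 n (x : CD R n) : ip x x = 0 -> x = 0.
Proof. elim: n x => [|n IH]; first by move=> x; rewrite ip0E => /eqP; rewrite mulf_eq0 orbb => /eqP.
move=> [a b]; simp => /eqP; rewrite paddr_eq0 ?ip_ge0 // => /andP[/eqP/IH -> /eqP/IH ->].
by []. Qed.

Lemma adj n : (forall a x y : CD R n, ip (ml a x) y = ip x (ml (cj a) y)) /\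
              (forall a x y : CD R n, ip (ml x a) y = ip x (ml y (cj a))).
Proof.
elim: n => [|n [IHL IHR]].
  split=> a x y; rewrite !ml0E !ip0E cj0E.
    by rewrite mulrCA mulrA.
  by rewrite -mulrA (mulrC y).
split=> [[a1 a2] [x1 x2] [y1 y2]|[a1 a2] [x1 x2] [y1 y2]]; simp.
  have e1 := IHL a1 x1 y1.
  have e2 : ip (ml (cj x2) a2) y1 = ip x2 (ml a2 (cj y1)) by rewrite IHR ipcj conjM conjK.
  have e3 := IHR a1 x2 y2.
  have e4 : ip (ml a2 (cj x1)) y2 = ip x1 (ml (cj y2) a2) by rewrite IHL ipcj conjM conjK.
  rewrite !ipDl !ipNl e1 e2 e3 e4 !ipDr !ipNr ?cmulNl ?cmulNr ?ipNr ?opprK. lra.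
have f1 := IHR a1 x1 y1.
have f2 : ip (ml (cj a2) x2) y1 = ip x2 (ml a2 y1) by rewrite IHL conjK.
have f3 := IHL a2 x1 y2.
have f4 : ip (ml x2 (cj a1)) y2 = ip x2 (ml y2 a1) by rewrite IHR conjK.
rewrite !ipDl !ipNl f1 f2 f3 f4 !ipDr !ipNr !conjN !conjK ?cmulNl ?cmulNr ?ipNr ?opprK. lra.
Qed.

Section Main.
Variables (n : nat) (I : CD R n).
Hypothesis cjI : cj I = - I.
Hypothesis II : ml I I = - cd_one R n.
Hypothesis ipI1 : ip I (cd_one R n) = 0.
Hypothesis ipII : ip I I = 1.
Local Notation one := (cd_one R n).

Lemma inCP z : in_CI I z <-> exists r s, z = r *: one + s *: I.
Proof. by []. Qed.
Lemma inC0 : in_CI I 0.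
Proof. by apply/inCP; exists 0, 0; rewrite !scale0r addr0. Qed.
Lemma inCD u v : in_CI I u -> in_CI I v -> in_CI I (u + v).
Proof.
move=> /inCP[r1 [s1 ->]] /inCP[r2 [s2 ->]]; apply/inCP; exists (r1 + r2), (s1 + s2).
by rewrite !scalerDl addrACA.
Qed.
Lemma inCZ a u : in_CI I u -> in_CI I (a *: u).
Proof.
move=> /inCP[r1 [s1 ->]]; apply/inCP; exists (a * r1), (a * s1).
by rewrite scalerDr !scalerA.
Qed.
Lemma inC1 : in_CI I one.
Proof. by apply/inCP; exists 1, 0; rewrite scale0r addr0 scale1r. Qed.
Lemma inCI : in_CI I I.
Proof. by apply/inCP; exists 0, 1; rewrite scale0r add0r scale1r. Qed.
Lemma inCM u v : in_CI I u -> in_CI I v -> in_CI I (ml u v).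
Proof.
move=> /inCP[r1 [s1 ->]] /inCP[r2 [s2 ->]].
rewrite cmulDl !cmulZl cmul1l; apply: inCD; apply: inCZ; first by apply: inCD; apply: inCZ; [exact: inC1|exact: inCI].
rewrite cmulDr !cmulZr cmul1r II; apply: inCD; apply: inCZ; [exact: inCI|].
by rewrite -scaleN1r; apply: inCZ; exact: inC1.
Qed.

Definition perp z := ip z one = 0 /\ ip z I = 0.
Lemma perpP z : perp z -> in_CI_perp I z.
Proof.
move=> [h1 h2] b /inCP[r [s ->]]. rewrite ipE ipDr !ipZr h1 h2. lra.
Qed.
Lemma perp0 : perp 0. Proof. by split; rewrite ip0l. Qed.
Lemma perpD u v : perp u -> perp v -> perp (u + v).
Proof. by move=> [h1 h2] [h3 h4]; split; rewrite ipDl ?h1 ?h2 ?h3 ?h4 addr0. Qed.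
Lemma perpZ a u : perp u -> perp (a *: u).
Proof. by move=> [h1 h2]; split; rewrite ipZl ?h1 ?h2 mulr0. Qed.
Lemma perpMI b : perp b -> perp (ml b I).
Proof.
move=> [h1 h2]; split; rewrite (proj2 (adj n)) cjI.
  by rewrite cmul1l ipNr h2 oppr0.
by rewrite cmulNr II opprK h1.
Qed.
Lemma perpM b v : perp b -> in_CI I v -> perp (ml b v).
Proof.
move=> hb /inCP[r [s ->]]; rewrite cmulDr !cmulZr cmul1r.
by apply: perpD; apply: perpZ => //; apply: perpMI.
Qed.
Lemma perp_inC u v : perp v -> in_CI I u -> ip v u = 0.
Proof. by move=> /perpP h /h; rewrite ipE. Qed.

Lemma powC x k : in_CI I x -> in_CI I (cd_pow x k).
Proof. move=> hx; elim: k => [|k IH] /=; [exact: inC1 | rewrite mulE; exact: inCM]. Qed.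

Lemma pevalI f k x : in_CI I x -> in_CI I (peval_from (polyI I f) k x).
Proof.
move=> hx; elim: f k => [|a f IH] k /=; first exact: inC0.
rewrite addE mulE; apply: inCD (IH _); apply: inCM (powC _ hx).
by exists (cd_ip a one), (cd_ip a I).
Qed.

Lemma piperp a : perp (piI_perp I a).
Proof.
rewrite /piI_perp /piI addE oppE addE !scaleE !ipE.
split; rewrite ipDl ipNl ipDl !ipZl ?ip11 ?ipI1 ?ipII ?(ipC one) ?ipI1; lra.
Qed.

Lemma pevalP f k x : in_CI I x -> perp (peval_from (polyI_perp I f) k x).
Proof.
move=> hx; elim: f k => [|a f IH] k /=; first exact: perp0.
rewrite addE mulE; apply: perpD (IH _); apply: perpM (powC _ hx).
exact: piperp.
Qed.

Lemma pevalDec f k x : peval_from f k x = peval_from (polyI I f) k x + peval_from (polyI_perp I f) k x.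
Proof.
elim: f k => [|a f IH] k /=; first by rewrite addr0.
have ha : a = piI I a + piI_perp I a by rewrite /piI_perp addE oppE addrC subrK.
rewrite !addE !mulE IH {1}ha cmulDl.
by rewrite addrACA.
Qed.
End Main.
End S.

Unset Implicit Arguments.
Set Strict Implicit.

Theorem proposition4p6 (R : realType) (n : nat) (I : CD R n) (f : seq (CD R n)) :
  cd_tr I = cd_zero R n ->
  cd_norm I = cd_one R n ->
  forall lam : CD R n, in_CI I lam ->
    [/\ in_CI I (peval (polyI I f) lam),
        in_CI_perp I (peval (polyI_perp I f) lam)
      & (peval f lam = cd_zero R n <->
         peval (polyI I f) lam = cd_zero R n /\
         peval (polyI_perp I f) lam = cd_zero R n)].
Proof.
move=> htr hn lam hlam.
have cjI : cj I = - I.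
  rewrite /cd_tr addE conjE zeroE in htr.
  by apply/eqP; rewrite -addr_eq0 addrC htr.
have II : ml I I = - cd_one R n.
  rewrite /cd_norm conjE mulE cjI cmulNl in hn.
  by rewrite -hn opprK.
have ipI1 : ip I (cd_one R n) = 0.
  have h := ip_conj I (cd_one R n).
  rewrite conj1 cjI ipNl in h. lra.
have ipII : ip I I = 1.
  have h := (proj1 (adj R n)) (cj I) I (cd_one R n).
  rewrite conjK cmul1r cjI cmulNl II opprK ip11 in h. by rewrite -h.
split.
- exact: pevalI.
- apply: perpP; exact: pevalP.
rewrite /peval (pevalDec I f 0 lam) !zeroE.
set u := peval_from (polyI I f) 0 lam.
set v := peval_from (polyI_perp I f) 0 lam.
have hu : in_CI I u by exact: pevalI.
have hv : perp I v by exact: pevalP.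
split => [h|[-> ->]]; last by rewrite addr0.
have vE : v = - u by apply/eqP; rewrite -addr_eq0 addrC h.
have v0 : v = 0.
  apply: ip_eq0. rewrite {2}vE ipNr (perp_inC hv hu) oppr0 //.
by split => //; move: h; rewrite v0 addr0.
Qed.
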